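(* Let $\mathbb{T}=[0,2\pi)\times[0,2\pi)$ with periodic boundary conditions, let $0\le \alpha<1$ and $\kappa>0$, and consider the surface quasi-geostrophic equation $$\partial_t\theta+\mathbf{u}\cdot\nabla\theta+\kappa(-\Delta)^\alpha\theta=0,\qquad \mathbf{u}=(\partial_y,-\partial_x)(-\Delta)^{-\frac12}\theta,$$ for a scalar function $\theta(x,y,t)$ on $\mathbb{T}\times[0,\infty)$. (i) Let $c_1,\dots,c_8$ be real constants and let $n,m,k$ be integers with $nm\neq 0$, such that $n^2+m^2=k^2$ whenever $(|c_1|+|c_2|+|c_3|+|c_4|)(|c_5|+|c_6|+|c_7|+|c_8|)\neq 0$. Then $$\theta=e^{-\kappa(n^2+m^2)^\alpha t}\big(c_1\sin nx\sin my+c_2\cos nx\sin my+c_3\sin nx\cos my+c_4\cos nx\cos my\big)$$ $$\qquad+e^{-\kappa|k|^{2\alpha}t}\big(c_5\sin kx+c_6\sin ky+c_7\cos kx+c_8\cos ky\big)$$ is an exact solution of the equation on $\mathbb{T}$. (ii) Let $n,m$ be integers with $|n|+|m|\neq 0$, and let $(a_k)_{k\in\mathbb{Z}},(b_k)_{k\in\mathbb{Z}}$ be real constants with $\sum_{k\in\mathbb{Z}}|k|(a_k^2+b_k^2)<\infty$. Then $$\theta=\sum_{k\in\mathbb{Z}}e^{-\kappa(n^2k^2+m^2k^2)^\alpha t}\big(a_k\cos(knx+kmy)+b_k\sin(knx+kmy)\big)$$ solves the equation on $\mathbb{T}$.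
   Context: On the $2\pi$-periodic torus $\mathbb{T}$, the operators $(-\Delta)^\alpha$ and $(-\Delta)^{-\frac12}$ are the Fourier multipliers acting on $e^{i(px+qy)}$ by multiplication by $(p^2+q^2)^\alpha$ and $(p^2+q^2)^{-1/2}$ respectively (the latter on nonzero Fourier modes). Thus $\mathbf{u}=(\partial_y(-\Delta)^{-1/2}\theta,\,-\partial_x(-\Delta)^{-1/2}\theta)$. *)

(* Defs.v *)
From Stdlib Require Import Reals ZArith.
From Coquelicot Require Import Coquelicot.

Open Scope R_scope.

(* r^a for r >= 0, with the convention 0^0 = 1 (so that (-Δ)^0 = Id and the
   multiplier (p^2+q^2)^α at the zero mode is 0 for α > 0 and 1 for α = 0). *)
Definition fracpow (r a : R) : R :=
  if Req_EM_T r 0 then (if Req_EM_T a 0 then 1 else 0) else Rpower r a.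

Definition modsq (p q : Z) : R := IZR p ^ 2 + IZR q ^ 2.

(* normalized Fourier coefficient of f on the 2π-periodic torus:
   (1/4π^2) ∫_0^{2π}∫_0^{2π} f(x,y) e^{-i(px+qy)} dy dx *)
Definition fcoef (f : R -> R -> R) (p q : Z) : C :=
  (/ (4 * PI ^ 2) *
     RInt (fun x => RInt (fun y => f x y * cos (IZR p * x + IZR q * y)) 0 (2 * PI)) 0 (2 * PI),
   - (/ (4 * PI ^ 2) *
     RInt (fun x => RInt (fun y => f x y * sin (IZR p * x + IZR q * y)) 0 (2 * PI)) 0 (2 * PI))).

Definition box_sum (F : Z -> Z -> C) (N : nat) : C :=
  sum_n (fun i => sum_n (fun j =>
     F (Z.of_nat i - Z.of_nat N)%Z (Z.of_nat j - Z.of_nat N)%Z) (2 * N)) (2 * N).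

Definition box_sum_R (F : Z -> Z -> R) (N : nat) : R :=
  sum_n (fun i => sum_n (fun j =>
     F (Z.of_nat i - Z.of_nat N)%Z (Z.of_nat j - Z.of_nat N)%Z) (2 * N)) (2 * N).

Definition is_sum_Z2 (F : Z -> Z -> C) (s : C) : Prop :=
  (exists M : R, forall N, box_sum_R (fun p q => Cmod (F p q)) N <= M) /\
  filterlim (box_sum F) eventually (locally s).

(* Fourier coefficient at ξ = (p,q) of u·∇θ, u = (∂_y,-∂_x)(-Δ)^{-1/2}θ, with
   Θ the Fourier coefficients of θ (convention e^{i(px+qy)}): the term indexed
   by η = (a,b) (η ≠ 0, ζ = ξ - η) is  (η1 ζ2 - η2 ζ1)/|η| Θ(η) Θ(ζ). *)
Definition sqg_nl_term (Th : Z -> Z -> C) (p q a b : Z) : C :=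
  if (Z.eqb a 0 && Z.eqb b 0)%bool then RtoC 0
  else Cmult (Cmult (RtoC ((IZR a * IZR (q - b) - IZR b * IZR (p - a)) / sqrt (modsq a b)))
                    (Th a b)) (Th (p - a)%Z (q - b)%Z).

(* Θ(p,q,t) (Fourier coefficients of θ(·,·,t)) solves SQG
   ∂_tθ + u·∇θ + κ(-Δ)^α θ = 0 on T×[0,∞), written mode by mode:
   θ(t) ∈ L^2(T) for t >= 0, the nonlinear convolution sum converges absolutely,
   and  d/dt Θ(ξ,t) = - (u·∇θ)^(ξ,t) - κ |ξ|^{2α} Θ(ξ,t). *)
Definition SQG_fourier_solution (kappa alpha : R) (Th : Z -> Z -> R -> C) : Prop :=
  (forall t, 0 <= t -> exists M : R, forall N,
      box_sum_R (fun p q => Cmod (Th p q t) ^ 2) N <= M) /\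
  (forall (p q : Z) (t : R), 0 <= t ->
     exists Nl : C,
       is_sum_Z2 (sqg_nl_term (fun a b => Th a b t) p q) Nl /\
       let rhs := Cminus (Copp Nl)
                   (Cmult (RtoC (kappa * fracpow (modsq p q) alpha)) (Th p q t)) in
       is_derive (fun s => Re (Th p q s)) t (Re rhs) /\
       is_derive (fun s => Im (Th p q s)) t (Im rhs)).

Definition periodic_xy (f : R -> R -> R) : Prop :=
  forall x y, f (x + 2 * PI) y = f x y /\ f x (y + 2 * PI) = f x y.

Definition solves_SQG (kappa alpha : R) (theta : R -> R -> R -> R) : Prop :=
  (forall t, periodic_xy (fun x y => theta x y t)) /\
  SQG_fourier_solution kappa alpha (fun p q t => fcoef (fun x y => theta x y t) p q).

(* θ = Σ_{k∈Z} θ_k (series understood in L^2(T), i.e. coefficientwise: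
   the Fourier coefficients of θ(t) are the (symmetric) sums of those of θ_k(t))
   solves SQG on T. *)
Definition solves_SQG_series (kappa alpha : R) (thk : Z -> R -> R -> R -> R) : Prop :=
  (forall k t, periodic_xy (fun x y => thk k x y t)) /\
  exists Th : Z -> Z -> R -> C,
    (forall p q t, filterlim
        (fun K : nat => sum_n (fun i =>
           fcoef (fun x y => thk (Z.of_nat i - Z.of_nat K)%Z x y t) p q) (2 * K))
        eventually (locally (Th p q t))) /\
    SQG_fourier_solution kappa alpha Th.

(* Main.v *)
Require Import Defs.
From Stdlib Require Import Reals ZArith Lia Lra List FunctionalExtensionality Classical.
From Coquelicot Require Import Coquelicot.
Open Scope R_scope.

Lemma sumn_plus (f g : nat -> R) n : sum_n (fun i => f i + g i) n = sum_n f n + sum_n g n.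
Proof. exact (sum_n_plus f g n). Qed.
Lemma sumn_scal (c : R) (f : nat -> R) n : sum_n (fun i => c * f i) n = c * sum_n f n.
Proof. exact (sum_n_mult_l c f n). Qed.
Lemma sumn_ext (f g : nat -> R) n : (forall i, (i <= n)%nat -> f i = g i) -> sum_n f n = sum_n g n.
Proof. intros; apply sum_n_ext_loc; auto. Qed.
Lemma sumn_le (f g : nat -> R) n : (forall i, (i <= n)%nat -> f i <= g i) -> sum_n f n <= sum_n g n.
Proof.
  induction n; intros H.
  - rewrite !sum_O; apply H; lia.
  - rewrite !sum_Sn. change (plus ?a ?b) with (a + b).
    apply Rplus_le_compat; [apply IHn; intros; apply H; lia| apply H; lia].
Qed.
Lemma sumn_zero n : sum_n (fun _ => 0) n = 0.
Proof. induction n. rewrite sum_O; auto. rewrite sum_Sn, IHn. exact (Rplus_0_r 0). Qed.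

Definition ind1 (N : nat) (c : Z) : R :=
  if (Z.leb (- Z.of_nat N) c && Z.leb c (Z.of_nat N))%bool then 1 else 0.

Lemma sum_ind_gen (N M : nat) (c : Z) :
  sum_n (fun i => if Z.eqb (Z.of_nat i - Z.of_nat N) c then 1 else 0) M
  = if (Z.leb (- Z.of_nat N) c && Z.leb c (Z.of_nat M - Z.of_nat N))%bool then 1 else 0.
Proof.
  induction M.
  - rewrite sum_O. change (Z.of_nat 0) with 0%Z.
    destruct (Z.eqb_spec (0 - Z.of_nat N) c); destruct (Z.leb_spec (- Z.of_nat N) c);
      destruct (Z.leb_spec c (0 - Z.of_nat N)); simpl; auto; lia.
  - rewrite sum_Sn, IHM. change (plus ?a ?b) with (a + b).
    rewrite Nat2Z.inj_succ.
    destruct (Z.eqb_spec (Z.succ (Z.of_nat M) - Z.of_nat N) c);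
    destruct (Z.leb_spec (- Z.of_nat N) c);
    destruct (Z.leb_spec c (Z.of_nat M - Z.of_nat N));
    destruct (Z.leb_spec c (Z.succ (Z.of_nat M) - Z.of_nat N)); simpl; try ring; lia.
Qed.

Lemma sum_ind (N : nat) (c : Z) :
  sum_n (fun i => if Z.eqb (Z.of_nat i - Z.of_nat N) c then 1 else 0) (2 * N) = ind1 N c.
Proof.
  rewrite sum_ind_gen. unfold ind1. replace (Z.of_nat (2 * N) - Z.of_nat N)%Z with (Z.of_nat N) by lia.
  reflexivity.
Qed.

Lemma ind1_range N c : 0 <= ind1 N c <= 1.
Proof. unfold ind1; destruct (_ && _)%bool; lra. Qed.
Lemma ind1_in N c : (Z.abs c <= Z.of_nat N)%Z -> ind1 N c = 1.
Proof. intros; unfold ind1. destruct (Z.leb_spec (- Z.of_nat N) c); destruct (Z.leb_spec c (Z.of_nat N)); simpl; auto; lia. Qed.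

Definition indz (p q a b : Z) : R := if (Z.eqb p a && Z.eqb q b)%bool then 1 else 0.

Lemma indz_range p q a b : 0 <= indz p q a b <= 1.
Proof. unfold indz; destruct (_ && _)%bool; lra. Qed.

Lemma box_ind (N : nat) (c d : Z) :
  box_sum_R (fun p q => indz p q c d) N = ind1 N c * ind1 N d.
Proof.
  unfold box_sum_R.
  rewrite (sumn_ext _ (fun i => (if Z.eqb (Z.of_nat i - Z.of_nat N) c then 1 else 0) *
     sum_n (fun j => if Z.eqb (Z.of_nat j - Z.of_nat N) d then 1 else 0) (2 * N))).
  - rewrite (sumn_ext _ (fun i => (sum_n (fun j => if Z.eqb (Z.of_nat j - Z.of_nat N) d then 1 else 0) (2 * N)) *
       (if Z.eqb (Z.of_nat i - Z.of_nat N) c then 1 else 0))).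
    + rewrite sumn_scal, !sum_ind. ring.
    + intros; ring.
  - intros i _. rewrite <- sumn_scal. apply sumn_ext. intros j _. unfold indz.
    destruct (Z.eqb _ c), (Z.eqb _ d); simpl; ring.
Qed.

Fixpoint lsum {X : Type} (f : X -> R) (l : list X) : R :=
  match l with nil => 0 | x :: l' => f x + lsum f l' end.

Lemma lsum_plus {X} (f g : X -> R) l : lsum (fun x => f x + g x) l = lsum f l + lsum g l.
Proof. induction l; simpl; [ring| rewrite IHl; ring]. Qed.
Lemma lsum_scal {X} c (f : X -> R) l : lsum (fun x => c * f x) l = c * lsum f l.
Proof. induction l; simpl; [ring| rewrite IHl; ring]. Qed.
Lemma lsum_ext {X} (f g : X -> R) l : (forall x, In x l -> f x = g x) -> lsum f l = lsum g l.
Proof. induction l; simpl; intros H; auto. rewrite H, IHl; auto. Qed.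
Lemma lsum_le {X} (f g : X -> R) l : (forall x, In x l -> f x <= g x) -> lsum f l <= lsum g l.
Proof. induction l; simpl; intros H; [lra|]. apply Rplus_le_compat; auto. Qed.
Lemma lsum_zero {X} (l : list X) : lsum (fun _ => 0) l = 0.
Proof. induction l; simpl; lra. Qed.
Lemma lsum_nonneg {X} (f : X -> R) l : (forall x, In x l -> 0 <= f x) -> 0 <= lsum f l.
Proof. intros H. apply Rle_trans with (lsum (fun _ => 0) l). rewrite lsum_zero; lra. apply lsum_le; auto. Qed.
Lemma lsum_app {X} (f : X -> R) l1 l2 : lsum f (l1 ++ l2) = lsum f l1 + lsum f l2.
Proof. induction l1; simpl; [ring| rewrite IHl1; ring]. Qed.
Lemma lsum_abs {X} (f : X -> R) l : Rabs (lsum f l) <= lsum (fun x => Rabs (f x)) l.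
Proof. induction l; simpl. rewrite Rabs_R0; lra. eapply Rle_trans; [apply Rabs_triang| lra]. Qed.
Lemma lsum_single {X} (f : X -> R) l x : In x l -> (forall y, In y l -> 0 <= f y) -> f x <= lsum f l.
Proof.
  induction l; simpl; intros Hx H; [easy|]. destruct Hx as [<-|Hx].
  - assert (0 <= lsum f l) by (apply lsum_nonneg; auto). lra.
  - assert (0 <= f a) by auto. assert (f x <= lsum f l) by auto. lra.
Qed.
Lemma lsum_swap {X Y} (A : X -> Y -> R) l1 l2 :
  lsum (fun x => lsum (fun y => A x y) l2) l1 = lsum (fun y => lsum (fun x => A x y) l1) l2.
Proof.
  induction l1; simpl. rewrite lsum_zero; auto.
  rewrite IHl1, <- lsum_plus. auto.
Qed.
Lemma lsum_antisym {X} (A : X -> X -> R) l :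
  (forall x y, In x l -> In y l -> A x y = - A y x) -> lsum (fun x => lsum (fun y => A x y) l) l = 0.
Proof.
  intros H. assert (E : lsum (fun x => lsum (fun y => A x y) l) l = - lsum (fun x => lsum (fun y => A x y) l) l).
  { transitivity (lsum (fun y => lsum (fun x => -1 * A y x) l) l).
    - rewrite lsum_swap. apply lsum_ext; intros; apply lsum_ext; intros. rewrite H; auto; ring.
    - rewrite (lsum_ext _ (fun y => -1 * lsum (fun x => A y x) l)). rewrite lsum_scal; ring.
      intros; rewrite lsum_scal; auto. }
  lra.
Qed.

Lemma box_sum_R_plus F G N : box_sum_R (fun p q => F p q + G p q) N = box_sum_R F N + box_sum_R G N.
Proof.
  unfold box_sum_R. rewrite <- sumn_plus. apply sumn_ext; intros. apply sumn_plus.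
Qed.
Lemma box_sum_R_scal c F N : box_sum_R (fun p q => c * F p q) N = c * box_sum_R F N.
Proof.
  unfold box_sum_R. rewrite <- sumn_scal. apply sumn_ext; intros. apply sumn_scal.
Qed.
Lemma box_sum_R_ext F G N : (forall p q, (Z.abs p <= Z.of_nat N)%Z -> (Z.abs q <= Z.of_nat N)%Z -> F p q = G p q) ->
  box_sum_R F N = box_sum_R G N.
Proof.
  intros H. unfold box_sum_R. apply sumn_ext; intros. apply sumn_ext; intros. apply H; lia.
Qed.
Lemma box_sum_R_le F G N : (forall p q, (Z.abs p <= Z.of_nat N)%Z -> (Z.abs q <= Z.of_nat N)%Z -> F p q <= G p q) ->
  box_sum_R F N <= box_sum_R G N.
Proof.
  intros H. unfold box_sum_R. apply sumn_le; intros. apply sumn_le; intros. apply H; lia.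
Qed.
Lemma box_sum_R_zero N : box_sum_R (fun _ _ => 0) N = 0.
Proof. unfold box_sum_R. rewrite (sumn_ext _ (fun _ => 0)). apply sumn_zero. intros; apply sumn_zero. Qed.

Lemma box_sum_R_lsum {X} (e : X -> Z * Z) (G : X -> R) l N :
  box_sum_R (fun p q => lsum (fun x => indz p q (fst (e x)) (snd (e x)) * G x) l) N
  = lsum (fun x => ind1 N (fst (e x)) * ind1 N (snd (e x)) * G x) l.
Proof.
  induction l; simpl.
  - apply box_sum_R_zero.
  - rewrite box_sum_R_plus, IHl. f_equal.
    rewrite (box_sum_R_ext _ (fun p q => G a * indz p q (fst (e a)) (snd (e a)))).
    rewrite box_sum_R_scal, box_ind. ring. intros; ring.
Qed.

Lemma BOX {X} (e : X -> Z * Z) (B : X -> R) l (F : Z -> Z -> R) N :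
  (forall x, In x l -> 0 <= B x) ->
  (forall p q, (Z.abs p <= Z.of_nat N)%Z -> (Z.abs q <= Z.of_nat N)%Z ->
       F p q <= lsum (fun x => indz p q (fst (e x)) (snd (e x)) * B x) l) ->
  box_sum_R F N <= lsum B l.
Proof.
  intros HB HF. eapply Rle_trans. apply box_sum_R_le. apply HF.
  rewrite box_sum_R_lsum. apply lsum_le. intros x Hx.
  pose proof (ind1_range N (fst (e x))). pose proof (ind1_range N (snd (e x))). pose proof (HB x Hx).
  assert (0 <= ind1 N (fst (e x)) * ind1 N (snd (e x)) <= 1) by (split; nra). nra.
Qed.

Lemma sin_2kPI (k : Z) : sin (2 * IZR k * PI) = 0.
Proof. apply sin_eq_0_1. exists (2 * k)%Z. rewrite mult_IZR. ring. Qed.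
Lemma cos_2kPI (k : Z) : cos (2 * IZR k * PI) = 1.
Proof.
  destruct (Z_le_gt_dec 0 k).
  - rewrite <- (Z2Nat.id k) by lia. rewrite <- INR_IZR_INZ.
    pose proof (cos_period 0 (Z.to_nat k)). rewrite Rplus_0_l, cos_0 in H. exact H.
  - replace k with (- Z.of_nat (Z.to_nat (- k)))%Z by lia. rewrite opp_IZR, <- INR_IZR_INZ.
    replace (2 * - INR (Z.to_nat (- k)) * PI) with (- (2 * INR (Z.to_nat (-k)) * PI)) by ring.
    rewrite cos_neg. pose proof (cos_period 0 (Z.to_nat (-k))). rewrite Rplus_0_l, cos_0 in H. exact H.
Qed.
Lemma sin_per (A : R) (k : Z) : sin (A + 2 * IZR k * PI) = sin A.
Proof. rewrite sin_plus, sin_2kPI, cos_2kPI. ring. Qed.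
Lemma cos_per (A : R) (k : Z) : cos (A + 2 * IZR k * PI) = cos A.
Proof. rewrite cos_plus, sin_2kPI, cos_2kPI. ring. Qed.

Lemma is_RInt_eq (f : R -> R) a b l l' : is_RInt f a b l -> l = l' -> is_RInt f a b l'.
Proof. intros H <-; auto. Qed.

Lemma int1 (A c s : R) (v : Z) :
  is_RInt (fun y => c * cos (A + IZR v * y) + s * sin (A + IZR v * y)) 0 (2 * PI)
    (if Z.eqb v 0 then 2 * PI * (c * cos A + s * sin A) else 0).
Proof.
  destruct (Z.eqb_spec v 0) as [->|Hv].
  - apply (is_RInt_ext (fun _ => c * cos A + s * sin A)).
    + intros x _. simpl. rewrite Rmult_0_l, Rplus_0_r. reflexivity.
    + eapply is_RInt_eq. apply is_RInt_const. change (scal (2 * PI - 0) (c * cos A + s * sin A)) with ((2 * PI - 0) * (c * cos A + s * sin A)). simpl; ring.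
  - assert (HV : IZR v <> 0) by (apply not_0_IZR; auto).
    set (G := fun y => (c * sin (A + IZR v * y) - s * cos (A + IZR v * y)) / IZR v).
    apply is_RInt_eq with (l := minus (G (2 * PI)) (G 0)).
    + apply (is_RInt_derive G).
      * intros x _. unfold G. auto_derive; auto. field. auto.
      * intros x _. apply (@ex_derive_continuous R_AbsRing R_NormedModule). auto_derive. auto.
    + unfold G. change (minus ?a ?b) with (a - b).
      replace (A + IZR v * (2 * PI)) with (A + 2 * IZR v * PI) by ring.
      rewrite sin_per, cos_per. unfold Rminus. rewrite Rmult_0_r, Rplus_0_r. apply Rplus_opp_r.
Qed.

Record trm := Trm { tc : R; ts : R; tu : Z; tv : Z }.
Definition ev1 (t : trm) (x y : R) : R :=
  tc t * cos (IZR (tu t) * x + IZR (tv t) * y) + ts t * sin (IZR (tu t) * x + IZR (tv t) * y).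
Definition ev (L : list trm) (x y : R) : R := lsum (fun t => ev1 t x y) L.

Definition inner (L : list trm) (x : R) : R :=
  lsum (fun t => if Z.eqb (tv t) 0 then 2 * PI * (tc t * cos (IZR (tu t) * x) + ts t * sin (IZR (tu t) * x)) else 0) L.
Definition I2 (L : list trm) : R :=
  lsum (fun t => if Z.eqb (tv t) 0 then (if Z.eqb (tu t) 0 then 2 * PI * (2 * PI * tc t) else 0) else 0) L.

Lemma is_RInt_inner L x : is_RInt (fun y => ev L x y) 0 (2 * PI) (inner L x).
Proof.
  induction L as [|t L IH]; unfold ev, inner; simpl.
  - eapply is_RInt_eq. apply is_RInt_const. change (scal (2 * PI - 0) 0) with ((2 * PI - 0) * 0). simpl; ring.
  - apply (is_RInt_plus (fun y => ev1 t x y) (fun y => lsum (fun t => ev1 t x y) L)); [|exact IH].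
    apply int1.
Qed.

Lemma is_RInt_outer L : is_RInt (fun x => inner L x) 0 (2 * PI) (I2 L).
Proof.
  induction L as [|t L IH]; unfold inner, I2; simpl.
  - eapply is_RInt_eq. apply is_RInt_const. change (scal (2 * PI - 0) 0) with ((2 * PI - 0) * 0). simpl; ring.
  - apply (is_RInt_plus _ (fun x => lsum _ L)); [|exact IH].
    destruct (Z.eqb (tv t) 0).
    + apply (is_RInt_ext (fun x => (2 * PI * tc t) * cos (0 + IZR (tu t) * x) + (2 * PI * ts t) * sin (0 + IZR (tu t) * x))).
      * intros; rewrite !Rplus_0_l; simpl; ring.
      * eapply is_RInt_eq. apply int1. destruct (Z.eqb (tu t) 0); [|auto]. rewrite cos_0, sin_0. simpl; ring.
    + eapply is_RInt_eq. apply is_RInt_const. change (scal (2 * PI - 0) 0) with ((2 * PI - 0) * 0). simpl; ring.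
Qed.

Lemma int2 L : RInt (fun x => RInt (fun y => ev L x y) 0 (2 * PI)) 0 (2 * PI) = I2 L.
Proof.
  rewrite (RInt_ext _ (fun x => inner L x)).
  - apply is_RInt_unique, is_RInt_outer.
  - intros; apply is_RInt_unique, is_RInt_inner.
Qed.

Definition mulc (p q : Z) (t : trm) : list trm :=
  Trm (tc t / 2) (ts t / 2) (tu t + p) (tv t + q) :: Trm (tc t / 2) (ts t / 2) (tu t - p) (tv t - q) :: nil.
Definition muls (p q : Z) (t : trm) : list trm :=
  Trm (- ts t / 2) (tc t / 2) (tu t + p) (tv t + q) :: Trm (ts t / 2) (- tc t / 2) (tu t - p) (tv t - q) :: nil.

Lemma lsum_flat_map {X Y} (f : Y -> R) (g : X -> list Y) l :
  lsum f (flat_map g l) = lsum (fun x => lsum f (g x)) l.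
Proof. induction l; simpl; auto. rewrite lsum_app, IHl; auto. Qed.

Lemma ev_mulc L p q x y : ev (flat_map (mulc p q) L) x y = ev L x y * cos (IZR p * x + IZR q * y).
Proof.
  unfold ev. rewrite lsum_flat_map. rewrite Rmult_comm, <- lsum_scal. apply lsum_ext. intros t _.
  unfold mulc, ev1; simpl. rewrite !plus_IZR, !minus_IZR.
  set (A := IZR (tu t) * x + IZR (tv t) * y). set (B := IZR p * x + IZR q * y).
  replace ((IZR (tu t) + IZR p) * x + (IZR (tv t) + IZR q) * y) with (A + B) by (unfold A, B; ring).
  replace ((IZR (tu t) - IZR p) * x + (IZR (tv t) - IZR q) * y) with (A - B) by (unfold A, B; ring).
  rewrite cos_plus, cos_minus, sin_plus, sin_minus. field.
Qed.

Lemma ev_muls L p q x y : ev (flat_map (muls p q) L) x y = ev L x y * sin (IZR p * x + IZR q * y).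
Proof.
  unfold ev. rewrite lsum_flat_map. rewrite Rmult_comm, <- lsum_scal. apply lsum_ext. intros t _.
  unfold muls, ev1; simpl. rewrite !plus_IZR, !minus_IZR.
  set (A := IZR (tu t) * x + IZR (tv t) * y). set (B := IZR p * x + IZR q * y).
  replace ((IZR (tu t) + IZR p) * x + (IZR (tv t) + IZR q) * y) with (A + B) by (unfold A, B; ring).
  replace ((IZR (tu t) - IZR p) * x + (IZR (tv t) - IZR q) * y) with (A - B) by (unfold A, B; ring).
  rewrite cos_plus, cos_minus, sin_plus, sin_minus. field.
Qed.

Record md := Md { me1 : Z; me2 : Z; mx : R; my : R }.
Definition ThB (M : list md) (p q : Z) : C :=
  (lsum (fun m => indz p q (me1 m) (me2 m) * mx m) M, lsum (fun m => indz p q (me1 m) (me2 m) * my m) M).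
Definition modes (L : list trm) : list md :=
  flat_map (fun t => Md (tu t) (tv t) (tc t / 2) (- ts t / 2) :: Md (- tu t) (- tv t) (tc t / 2) (ts t / 2) :: nil) L.

Lemma PI2_neq0 : 4 * PI ^ 2 <> 0.
Proof. pose proof PI_RGT_0. nra. Qed.

Lemma fcoef_ev L p q : fcoef (fun x y => ev L x y) p q = ThB (modes L) p q.
Proof.
  unfold fcoef, ThB, modes.
  rewrite (RInt_ext (fun x => RInt (fun y => ev L x y * cos (IZR p * x + IZR q * y)) 0 (2 * PI))
                    (fun x => RInt (fun y => ev (flat_map (mulc p q) L) x y) 0 (2 * PI))).
  2: { intros; apply RInt_ext; intros; rewrite ev_mulc; auto. }
  rewrite (RInt_ext (fun x => RInt (fun y => ev L x y * sin (IZR p * x + IZR q * y)) 0 (2 * PI))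
                    (fun x => RInt (fun y => ev (flat_map (muls p q) L) x y) 0 (2 * PI))).
  2: { intros; apply RInt_ext; intros; rewrite ev_muls; auto. }
  rewrite !int2. unfold I2. rewrite !lsum_flat_map.
  pose proof PI2_neq0.
  f_equal.
  - rewrite <- lsum_scal. apply lsum_ext. intros t _. unfold mulc, muls, indz; simpl.
    destruct (Z.eqb_spec (tv t + q) 0), (Z.eqb_spec (tu t + p) 0), (Z.eqb_spec (tv t - q) 0), (Z.eqb_spec (tu t - p) 0),
      (Z.eqb_spec p (tu t)), (Z.eqb_spec q (tv t)), (Z.eqb_spec p (- tu t)), (Z.eqb_spec q (- tv t));
      simpl; try (exfalso; lia); field; pose proof PI_RGT_0; lra.
  - rewrite Ropp_mult_distr_l, <- lsum_scal. apply lsum_ext. intros t _. unfold mulc, muls, indz; simpl.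
    destruct (Z.eqb_spec (tv t + q) 0), (Z.eqb_spec (tu t + p) 0), (Z.eqb_spec (tv t - q) 0), (Z.eqb_spec (tu t - p) 0),
      (Z.eqb_spec p (tu t)), (Z.eqb_spec q (tv t)), (Z.eqb_spec p (- tu t)), (Z.eqb_spec q (- tv t));
      simpl; try (exfalso; lia); field; pose proof PI_RGT_0; lra.
Qed.

Lemma ev_per L x y : ev L (x + 2 * PI) y = ev L x y /\ ev L x (y + 2 * PI) = ev L x y.
Proof.
  unfold ev; split; apply lsum_ext; intros t _; unfold ev1.
  - replace (IZR (tu t) * (x + 2 * PI) + IZR (tv t) * y) with (IZR (tu t) * x + IZR (tv t) * y + 2 * IZR (tu t) * PI) by ring.
    rewrite sin_per, cos_per; auto.
  - replace (IZR (tu t) * x + IZR (tv t) * (y + 2 * PI)) with (IZR (tu t) * x + IZR (tv t) * y + 2 * IZR (tv t) * PI) by ring.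
    rewrite sin_per, cos_per; auto.
Qed.

Lemma sum_n_C (f : nat -> C) n : sum_n f n = (sum_n (fun i => fst (f i)) n, sum_n (fun i => snd (f i)) n).
Proof.
  induction n.
  - rewrite !sum_O. destruct (f 0%nat); auto.
  - rewrite !sum_Sn, IHn. reflexivity.
Qed.

Lemma box_sum_C (F : Z -> Z -> C) N :
  box_sum F N = (box_sum_R (fun a b => fst (F a b)) N, box_sum_R (fun a b => snd (F a b)) N).
Proof.
  unfold box_sum, box_sum_R. rewrite sum_n_C. f_equal; apply sum_n_ext; intros; rewrite sum_n_C; auto.
Qed.

Lemma Cmod_le_abs (z : C) : Cmod z <= Rabs (fst z) + Rabs (snd z).
Proof.
  unfold Cmod. destruct z as [x y]; simpl.
  rewrite <- (sqrt_Rsqr (Rabs x + Rabs y)) by (pose proof (Rabs_pos x); pose proof (Rabs_pos y); lra).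
  apply sqrt_le_1_alt. unfold Rsqr. pose proof (Rabs_pos x); pose proof (Rabs_pos y).
  assert (Hx : x * (x * 1) = Rabs x * Rabs x) by (rewrite <- Rabs_mult, Rabs_right; [ring| nra]).
  assert (Hy : y * (y * 1) = Rabs y * Rabs y) by (rewrite <- Rabs_mult, Rabs_right; [ring| nra]).
  rewrite Hx, Hy. nra.
Qed.

Definition rr (p q a b : Z) : R := (IZR a * IZR (q - b) - IZR b * IZR (p - a)) / sqrt (modsq a b).

Definition Cond (M : list md) : Prop :=
  forall m1 m2, In m1 M -> In m2 M ->
    modsq (me1 m1) (me2 m1) = modsq (me1 m2) (me2 m2) \/ (mx m1 = 0 /\ my m1 = 0) \/ (mx m2 = 0 /\ my m2 = 0).

Definition Are (M : list md) p q (m1 m2 : md) : R :=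
  if (Z.eqb (me1 m1) 0 && Z.eqb (me2 m1) 0)%bool then 0 else
  indz (p - me1 m1) (q - me2 m1) (me1 m2) (me2 m2) * (rr p q (me1 m1) (me2 m1) * (mx m1 * mx m2 - my m1 * my m2)).
Definition Aim (M : list md) p q (m1 m2 : md) : R :=
  if (Z.eqb (me1 m1) 0 && Z.eqb (me2 m1) 0)%bool then 0 else
  indz (p - me1 m1) (q - me2 m1) (me1 m2) (me2 m2) * (rr p q (me1 m1) (me2 m1) * (mx m1 * my m2 + my m1 * mx m2)).

Lemma lsum_ind_mul (M : list md) a b (h : md -> R) :
  lsum (fun m => indz a b (me1 m) (me2 m) * h m) M = lsum (fun m => indz a b (me1 m) (me2 m) * h m) M.
Proof. auto. Qed.

Lemma nl_fst M p q a b :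
  fst (sqg_nl_term (ThB M) p q a b) =
  lsum (fun m1 => indz a b (me1 m1) (me2 m1) * lsum (fun m2 => Are M p q m1 m2) M) M.
Proof.
  unfold sqg_nl_term.
  destruct (Z.eqb a 0 && Z.eqb b 0)%bool eqn:Hab.
  - simpl. symmetry. rewrite <- (lsum_zero M). apply lsum_ext; intros m1 _.
    unfold indz. destruct (Z.eqb_spec a (me1 m1)), (Z.eqb_spec b (me2 m1)); simpl; try ring.
    unfold Are. rewrite <- e, <- e0, Hab. rewrite lsum_zero; ring.
  - unfold ThB; simpl.
    set (Xz := lsum (fun m => indz (p - a) (q - b) (me1 m) (me2 m) * mx m) M).
    set (Yz := lsum (fun m => indz (p - a) (q - b) (me1 m) (me2 m) * my m) M).
    set (r := (IZR a * IZR (q - b) - IZR b * IZR (p - a)) / sqrt (modsq a b)).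
    transitivity (lsum (fun m1 => (r * Xz) * (indz a b (me1 m1) (me2 m1) * mx m1) +
                                   (- r * Yz) * (indz a b (me1 m1) (me2 m1) * my m1)) M).
    + rewrite lsum_plus, !lsum_scal; ring.
    + apply lsum_ext. intros m1 _. unfold indz at 1 2 3. destruct (Z.eqb_spec a (me1 m1)), (Z.eqb_spec b (me2 m1)); simpl; try ring.
      unfold Are. rewrite <- e, <- e0, Hab.
      rewrite (lsum_ext _ (fun m2 => (r * mx m1) * (indz (p - a) (q - b) (me1 m2) (me2 m2) * mx m2) +
                                   (- r * my m1) * (indz (p - a) (q - b) (me1 m2) (me2 m2) * my m2))).
      * rewrite lsum_plus, !lsum_scal. fold Xz Yz. ring.
      * intros; unfold rr, r; ring.
Qed.

Lemma nl_snd M p q a b :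
  snd (sqg_nl_term (ThB M) p q a b) =
  lsum (fun m1 => indz a b (me1 m1) (me2 m1) * lsum (fun m2 => Aim M p q m1 m2) M) M.
Proof.
  unfold sqg_nl_term.
  destruct (Z.eqb a 0 && Z.eqb b 0)%bool eqn:Hab.
  - simpl. symmetry. rewrite <- (lsum_zero M). apply lsum_ext; intros m1 _.
    unfold indz. destruct (Z.eqb_spec a (me1 m1)), (Z.eqb_spec b (me2 m1)); simpl; try ring.
    unfold Aim. rewrite <- e, <- e0, Hab. rewrite lsum_zero; ring.
  - unfold ThB; simpl.
    set (Xz := lsum (fun m => indz (p - a) (q - b) (me1 m) (me2 m) * mx m) M).
    set (Yz := lsum (fun m => indz (p - a) (q - b) (me1 m) (me2 m) * my m) M).
    set (r := (IZR a * IZR (q - b) - IZR b * IZR (p - a)) / sqrt (modsq a b)).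
    transitivity (lsum (fun m1 => (r * Yz) * (indz a b (me1 m1) (me2 m1) * mx m1) +
                                   (r * Xz) * (indz a b (me1 m1) (me2 m1) * my m1)) M).
    + rewrite lsum_plus, !lsum_scal; ring.
    + apply lsum_ext. intros m1 _. unfold indz at 1 2 3.
      destruct (Z.eqb_spec a (me1 m1)), (Z.eqb_spec b (me2 m1)); simpl; try ring.
      unfold Aim. rewrite <- e, <- e0, Hab.
      rewrite (lsum_ext _ (fun m2 => (r * mx m1) * (indz (p - a) (q - b) (me1 m2) (me2 m2) * my m2) +
                                   (r * my m1) * (indz (p - a) (q - b) (me1 m2) (me2 m2) * mx m2))).
      * rewrite lsum_plus, !lsum_scal. fold Xz Yz. ring.
      * intros; unfold rr, r; ring.
Qed.

Lemma indz_swap p q e1 e2 f1 f2 :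
  indz (p - e1) (q - e2) f1 f2 = indz (p - f1) (q - f2) e1 e2.
Proof.
  unfold indz. destruct (Z.eqb_spec (p - e1) f1), (Z.eqb_spec (q - e2) f2),
    (Z.eqb_spec (p - f1) e1), (Z.eqb_spec (q - f2) e2); simpl; auto; lia.
Qed.

Lemma rr_anti p q e1 e2 f1 f2 :
  p = (e1 + f1)%Z -> q = (e2 + f2)%Z -> modsq e1 e2 = modsq f1 f2 ->
  rr p q e1 e2 = - rr p q f1 f2.
Proof.
  intros -> -> H. unfold rr. rewrite H.
  replace (e1 + f1 - e1)%Z with f1 by ring. replace (e2 + f2 - e2)%Z with f2 by ring.
  replace (e1 + f1 - f1)%Z with e1 by ring. replace (e2 + f2 - f2)%Z with e2 by ring.
  unfold Rdiv. ring.
Qed.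

Lemma rr_zero p q f1 f2 :
  p = (0 + f1)%Z -> q = (0 + f2)%Z -> rr p q f1 f2 = 0.
Proof.
  intros -> ->. unfold rr. replace (0 + f1 - f1)%Z with 0%Z by ring. replace (0 + f2 - f2)%Z with 0%Z by ring.
  simpl. unfold Rdiv. ring.
Qed.

Lemma A_anti M p q (G : md -> md -> R) (Gs : forall m1 m2, G m1 m2 = G m2 m1)
  (G0 : forall m1 m2, (mx m1 = 0 /\ my m1 = 0) -> G m1 m2 = 0) :
  Cond M ->
  forall m1 m2, In m1 M -> In m2 M ->
   (if (Z.eqb (me1 m1) 0 && Z.eqb (me2 m1) 0)%bool then 0 else
      indz (p - me1 m1) (q - me2 m1) (me1 m2) (me2 m2) * (rr p q (me1 m1) (me2 m1) * G m1 m2))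
   = - (if (Z.eqb (me1 m2) 0 && Z.eqb (me2 m2) 0)%bool then 0 else
      indz (p - me1 m2) (q - me2 m2) (me1 m1) (me2 m1) * (rr p q (me1 m2) (me2 m2) * G m2 m1)).
Proof.
  intros HC m1 m2 H1 H2.
  rewrite (indz_swap p q (me1 m2)). rewrite (Gs m2 m1).
  unfold indz.
  destruct (Z.eqb_spec (p - me1 m1) (me1 m2)), (Z.eqb_spec (q - me2 m1) (me2 m2)); simpl;
    try (destruct (_ && _)%bool; destruct (_ && _)%bool; ring).
  assert (Hp : p = (me1 m1 + me1 m2)%Z) by lia. assert (Hq : q = (me2 m1 + me2 m2)%Z) by lia.
  destruct (Z.eqb (me1 m1) 0 && Z.eqb (me2 m1) 0)%bool eqn:Z1;
  destruct (Z.eqb (me1 m2) 0 && Z.eqb (me2 m2) 0)%bool eqn:Z2.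
  - ring.
  - apply andb_prop in Z1. destruct Z1 as [Z1 Z1']. apply Z.eqb_eq in Z1, Z1'.
    rewrite (rr_zero p q (me1 m2)); [ring|lia|lia].
  - apply andb_prop in Z2. destruct Z2 as [Z2 Z2']. apply Z.eqb_eq in Z2, Z2'.
    rewrite (rr_zero p q (me1 m1)); [ring|lia|lia].
  - destruct (HC m1 m2 H1 H2) as [E | [E|E]].
    + rewrite (rr_anti p q (me1 m1) (me2 m1) (me1 m2) (me2 m2)); auto; ring.
    + rewrite G0; auto; ring.
    + rewrite (Gs m1 m2), G0; auto; ring.
Qed.

Definition maxe (M : list md) : Z := fold_right (fun m acc => Z.max (Z.abs (me1 m) + Z.abs (me2 m)) acc) 0%Z M.
Lemma maxe_spec M m : In m M -> (Z.abs (me1 m) <= maxe M /\ Z.abs (me2 m) <= maxe M)%Z.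
Proof.
  induction M; simpl; intros H; [easy|]. destruct H as [<-|H].
  - lia.
  - specialize (IHM H). lia.
Qed.
Lemma maxe_nonneg M : (0 <= maxe M)%Z.
Proof. induction M; simpl; lia. Qed.

Lemma lsum_ind_abs {X} (i : X -> R) (g : X -> R) l : (forall x, 0 <= i x) ->
  Rabs (lsum (fun x => i x * g x) l) <= lsum (fun x => i x * Rabs (g x)) l.
Proof.
  intros H. eapply Rle_trans. apply lsum_abs. apply lsum_le. intros x _.
  rewrite Rabs_mult, (Rabs_right (i x)); [lra| apply Rle_ge, H].
Qed.

Lemma NL M p q : Cond M -> is_sum_Z2 (sqg_nl_term (ThB M) p q) (RtoC 0).
Proof.
  intros HC.
  set (gre := fun m1 => lsum (fun m2 => Are M p q m1 m2) M).
  set (gim := fun m1 => lsum (fun m2 => Aim M p q m1 m2) M).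
  assert (Sre : lsum gre M = 0).
  { apply lsum_antisym. intros x y Hx Hy. unfold Are.
    exact (A_anti M p q (fun m1 m2 => mx m1 * mx m2 - my m1 * my m2)
             ltac:(intros; cbv beta; ring) ltac:(intros m1 m2 [E1 E2]; cbv beta; rewrite E1, E2; ring) HC x y Hx Hy). }
  assert (Sim : lsum gim M = 0).
  { apply lsum_antisym. intros x y Hx Hy. unfold Aim.
    exact (A_anti M p q (fun m1 m2 => mx m1 * my m2 + my m1 * mx m2)
             ltac:(intros; cbv beta; ring) ltac:(intros m1 m2 [E1 E2]; cbv beta; rewrite E1, E2; ring) HC x y Hx Hy). }
  split.
  - exists (lsum (fun m1 => Rabs (gre m1) + Rabs (gim m1)) M). intros N.
    apply (BOX (fun m => (me1 m, me2 m))).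
    + intros; pose proof (Rabs_pos (gre x)); pose proof (Rabs_pos (gim x)); lra.
    + intros a b _ _. simpl. eapply Rle_trans. apply Cmod_le_abs.
      rewrite nl_fst, nl_snd.
      eapply Rle_trans; [apply Rplus_le_compat; apply (lsum_ind_abs (fun m => indz a b (me1 m) (me2 m)));
        intros; apply indz_range|].
      rewrite <- lsum_plus. apply lsum_le. intros. fold (gre x) (gim x). right; ring.
  - apply (filterlim_ext_loc (fun _ => RtoC 0)); [| apply filterlim_const].
    exists (Z.to_nat (maxe M)). intros N HN.
    rewrite box_sum_C. unfold RtoC. pose proof (maxe_nonneg M).
    assert (Hin : forall m, In m M -> ind1 N (me1 m) * ind1 N (me2 m) = 1).
    { intros m Hm. destruct (maxe_spec M m Hm). rewrite !ind1_in by lia. ring. }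
    f_equal.
    + rewrite (box_sum_R_ext _ (fun a b => lsum (fun m1 => indz a b (fst (me1 m1, me2 m1)) (snd (me1 m1, me2 m1)) * gre m1) M))
        by (intros; rewrite nl_fst; auto).
      rewrite (box_sum_R_lsum (fun m => (me1 m, me2 m))). simpl. rewrite <- Sre. symmetry.
      apply lsum_ext. intros m Hm. rewrite Hin; auto; ring.
    + rewrite (box_sum_R_ext _ (fun a b => lsum (fun m1 => indz a b (fst (me1 m1, me2 m1)) (snd (me1 m1, me2 m1)) * gim m1) M))
        by (intros; rewrite nl_snd; auto).
      rewrite (box_sum_R_lsum (fun m => (me1 m, me2 m))). simpl. rewrite <- Sim. symmetry.
      apply lsum_ext. intros m Hm. rewrite Hin; auto; ring.
Qed.

Section T.
Variables kappa alpha : R.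
Definition Ef (u v : Z) (t : R) : R := exp (- kappa * fracpow (modsq u v) alpha * t).
Definition Lt (t : R) (L0 : list trm) : list trm :=
  map (fun tr => Trm (Ef (tu tr) (tv tr) t * tc tr) (Ef (tu tr) (tv tr) t * ts tr) (tu tr) (tv tr)) L0.
Definition scaleM (t : R) (M : list md) : list md :=
  map (fun m => Md (me1 m) (me2 m) (Ef (me1 m) (me2 m) t * mx m) (Ef (me1 m) (me2 m) t * my m)) M.

Lemma modsq_opp u v : modsq (- u) (- v) = modsq u v.
Proof. unfold modsq. rewrite !opp_IZR. ring. Qed.

Lemma modes_Lt t L0 : modes (Lt t L0) = scaleM t (modes L0).
Proof.
  induction L0 as [|tr L IH]; simpl; auto. rewrite IH. unfold Ef. rewrite modsq_opp.
  f_equal; [f_equal; field|f_equal; f_equal; field].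
Qed.

Lemma lsum_map {X Y} (f : Y -> R) (g : X -> Y) l : lsum f (map g l) = lsum (fun x => f (g x)) l.
Proof. induction l; simpl; auto. rewrite IHl; auto. Qed.

Lemma ThB_scale t M p q :
  ThB (scaleM t M) p q = (Ef p q t * fst (ThB M p q), Ef p q t * snd (ThB M p q)).
Proof.
  unfold ThB, scaleM; simpl. rewrite !lsum_map, <- !lsum_scal. simpl.
  f_equal; apply lsum_ext; intros m _; unfold indz;
    destruct (Z.eqb_spec p (me1 m)), (Z.eqb_spec q (me2 m)); simpl; subst; ring.
Qed.

Lemma Cond_scale t M : Cond M -> Cond (scaleM t M).
Proof.
  intros HC m1 m2 H1 H2. unfold scaleM in H1, H2. apply in_map_iff in H1, H2.
  destruct H1 as [n1 [<- H1]], H2 as [n2 [<- H2]]. simpl.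
  destruct (HC n1 n2 H1 H2) as [E|[[E1 E2]|[E1 E2]]]; auto; rewrite E1, E2; right; [left|right]; split; ring.
Qed.

Lemma Cmod_sq (z : C) : Cmod z ^ 2 = fst z ^ 2 + snd z ^ 2.
Proof. unfold Cmod. rewrite pow2_sqrt; auto. pose proof (pow2_ge_0 (fst z)); pose proof (pow2_ge_0 (snd z)); lra. Qed.

Lemma sq_bound (M : list md) (i : md -> R) (x : md -> R) :
  (forall m, 0 <= i m <= 1) ->
  lsum (fun m => i m * x m) M ^ 2 <= lsum (fun m => i m * (lsum (fun m => Rabs (x m)) M * Rabs (x m))) M.
Proof.
  intros Hi. set (S := lsum (fun m => Rabs (x m)) M).
  assert (HA : Rabs (lsum (fun m => i m * x m) M) <= lsum (fun m => i m * Rabs (x m)) M).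
  { apply lsum_ind_abs. intros; apply Hi. }
  assert (HT : lsum (fun m => i m * Rabs (x m)) M <= S).
  { apply lsum_le. intros m _. pose proof (Hi m); pose proof (Rabs_pos (x m)). nra. }
  rewrite (lsum_ext (fun m => i m * (S * Rabs (x m))) (fun m => S * (i m * Rabs (x m)))) by (intros; ring). rewrite lsum_scal.
  pose proof (Rabs_pos (lsum (fun m => i m * x m) M)).
  rewrite <- (pow2_abs (lsum _ M)). nra.
Qed.

Lemma L2_bound (M : list md) : exists B, forall N, box_sum_R (fun p q => Cmod (ThB M p q) ^ 2) N <= B.
Proof.
  set (Sx := lsum (fun m => Rabs (mx m)) M). set (Sy := lsum (fun m => Rabs (my m)) M).
  exists (lsum (fun m => Sx * Rabs (mx m) + Sy * Rabs (my m)) M). intros N.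
  apply (BOX (fun m => (me1 m, me2 m))).
  - intros m _. assert (0 <= Sx) by (apply lsum_nonneg; intros; apply Rabs_pos).
    assert (0 <= Sy) by (apply lsum_nonneg; intros; apply Rabs_pos).
    pose proof (Rabs_pos (mx m)); pose proof (Rabs_pos (my m)). nra.
  - intros p q _ _. rewrite Cmod_sq. unfold ThB; simpl.
    rewrite (lsum_ext (fun m => indz p q (me1 m) (me2 m) * (Sx * Rabs (mx m) + Sy * Rabs (my m))) (fun m => indz p q (me1 m) (me2 m) * (Sx * Rabs (mx m)) + indz p q (me1 m) (me2 m) * (Sy * Rabs (my m))))
      by (intros; ring).
    rewrite lsum_plus. apply Rplus_le_compat; apply sq_bound; intros; apply indz_range.
Qed.

Lemma SQG_modes (M0 : list md) : Cond M0 ->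
  SQG_fourier_solution kappa alpha (fun p q t => ThB (scaleM t M0) p q).
Proof.
  intros HC. split.
  - intros t _. apply L2_bound.
  - intros p q t _. exists (RtoC 0). split; [apply NL, Cond_scale, HC|].
    cbv zeta. rewrite !ThB_scale.
    set (X := fst (ThB M0 p q)). set (Y := snd (ThB M0 p q)). split.
    + apply (is_derive_ext (fun s => Ef p q s * X)).
      { intros; rewrite ThB_scale; auto. }
      unfold Ef. simpl. auto_derive; auto. ring.
    + apply (is_derive_ext (fun s => Ef p q s * Y)).
      { intros; rewrite ThB_scale; auto. }
      unfold Ef. simpl. auto_derive; auto. ring.
Qed.

Lemma fcoef_ext (f g : R -> R -> R) p q : (forall x y, f x y = g x y) -> fcoef f p q = fcoef g p q.
Proof.
  intros H. unfold fcoef. f_equal; f_equal; [|f_equal]; apply RInt_ext; intros; apply RInt_ext; intros; rewrite H; auto.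
Qed.

End T.

Lemma solves_from_ev kappa alpha (theta : R -> R -> R -> R) L0 :
  (forall x y t, theta x y t = ev (Lt kappa alpha t L0) x y) -> Cond (modes L0) ->
  solves_SQG kappa alpha theta.
Proof.
  intros Hth HC. split.
  - intros t x y. rewrite !Hth. apply ev_per.
  - replace (fun p q t => fcoef (fun x y => theta x y t) p q) with (fun p q t => ThB (scaleM kappa alpha t (modes L0)) p q).
    + apply SQG_modes, HC.
    + apply functional_extensionality; intro p. apply functional_extensionality; intro q.
      apply functional_extensionality; intro t.
      rewrite (fcoef_ext _ (fun x y => ev (Lt kappa alpha t L0) x y)) by auto.
      rewrite fcoef_ev, modes_Lt. auto.
Qed.

Lemma part1 (kappa alpha : R) :
  (forall (c1 c2 c3 c4 c5 c6 c7 c8 : R) (n m k : Z),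
      (n * m <> 0)%Z ->
      ((Rabs c1 + Rabs c2 + Rabs c3 + Rabs c4) * (Rabs c5 + Rabs c6 + Rabs c7 + Rabs c8) <> 0 ->
         (n * n + m * m = k * k)%Z) ->
      solves_SQG kappa alpha
        (fun x y t =>
           exp (- kappa * fracpow (IZR n ^ 2 + IZR m ^ 2) alpha * t) *
             (c1 * sin (IZR n * x) * sin (IZR m * y) + c2 * cos (IZR n * x) * sin (IZR m * y)
              + c3 * sin (IZR n * x) * cos (IZR m * y) + c4 * cos (IZR n * x) * cos (IZR m * y))
           + exp (- kappa * fracpow (IZR k ^ 2) alpha * t) *
             (c5 * sin (IZR k * x) + c6 * sin (IZR k * y)
              + c7 * cos (IZR k * x) + c8 * cos (IZR k * y)))).
Proof.
  intros c1 c2 c3 c4 c5 c6 c7 c8 n m k Hnm Hk.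
  apply (solves_from_ev _ _ _
    (Trm ((c4 - c1) / 2) ((c2 + c3) / 2) n m :: Trm ((c1 + c4) / 2) ((c3 - c2) / 2) n (- m)
     :: Trm c7 c5 k 0 :: Trm c8 c6 0 k :: nil)).
  - intros x y t. unfold ev, Lt, Ef. cbn [lsum map tu tv tc ts ev1].
    assert (E1 : modsq n (- m) = IZR n ^ 2 + IZR m ^ 2) by (unfold modsq; rewrite opp_IZR; ring).
    assert (E2 : modsq k 0 = IZR k ^ 2) by (unfold modsq; simpl; ring).
    assert (E3 : modsq 0 k = IZR k ^ 2) by (unfold modsq; simpl; ring).
    rewrite E1, E2, E3. unfold modsq.
    set (X1 := exp (- kappa * fracpow (IZR n ^ 2 + IZR m ^ 2) alpha * t)).
    set (X2 := exp (- kappa * fracpow (IZR k ^ 2) alpha * t)).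
    unfold ev1; cbn [tc ts tu tv]. rewrite opp_IZR.
    replace (IZR n * x + - IZR m * y) with (IZR n * x - IZR m * y) by ring.
    replace (IZR 0 * x + IZR k * y) with (IZR k * y) by (simpl; ring).
    replace (IZR k * x + IZR 0 * y) with (IZR k * x) by (simpl; ring).
    rewrite cos_plus, sin_plus, cos_minus, sin_minus. field.
  - assert (HS : (c1 = 0 /\ c2 = 0 /\ c3 = 0 /\ c4 = 0) \/ (c5 = 0 /\ c6 = 0 /\ c7 = 0 /\ c8 = 0) \/
                 IZR n ^ 2 + IZR m ^ 2 = IZR k ^ 2).
    { destruct (Req_dec (Rabs c1 + Rabs c2 + Rabs c3 + Rabs c4) 0) as [H1|H1].
      - left. pose proof (Rabs_pos c1); pose proof (Rabs_pos c2); pose proof (Rabs_pos c3); pose proof (Rabs_pos c4).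
        repeat split; apply Rabs_eq_0; lra.
      - destruct (Req_dec (Rabs c5 + Rabs c6 + Rabs c7 + Rabs c8) 0) as [H2|H2].
        + right; left. pose proof (Rabs_pos c5); pose proof (Rabs_pos c6); pose proof (Rabs_pos c7); pose proof (Rabs_pos c8).
          repeat split; apply Rabs_eq_0; lra.
        + right; right. specialize (Hk (Rmult_integral_contrapositive_currified _ _ H1 H2)).
          apply (f_equal IZR) in Hk. rewrite !plus_IZR, !mult_IZR in Hk. nra. }
    intros m1 m2 H1 H2. simpl in H1, H2.
    repeat (destruct H1 as [<-|H1]); try contradiction;
    repeat (destruct H2 as [<-|H2]); try contradiction; cbn [me1 me2 mx my];
    destruct HS as [[-> [-> [-> ->]]] | [[-> [-> [-> ->]]] | HS]];
    first [ left; unfold modsq; rewrite ?opp_IZR; cbn [IZR]; nra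
          | right; left; split; lra
          | right; right; split; lra ].
Qed.

Lemma fracpow_nonneg r a : 0 <= fracpow r a.
Proof. unfold fracpow. destruct (Req_EM_T r 0); [destruct (Req_EM_T a 0); lra|]. unfold Rpower. left; apply exp_pos. Qed.

Lemma exp_le1 x : x <= 0 -> exp x <= 1.
Proof. intros [H|H]. left. rewrite <- exp_0. apply exp_increasing; auto. subst; rewrite exp_0; lra. Qed.

Lemma sum_front (f : nat -> R) n : sum_n f (S n) = f 0%nat + sum_n (fun i => f (S i)) n.
Proof.
  induction n.
  - rewrite sum_Sn, !sum_O. reflexivity.
  - rewrite sum_Sn, IHn, (sum_Sn (fun i => f (S i))). change (plus ?a ?b) with (a + b). simpl; ring.
Qed.

Lemma shift_step (g : Z -> R) K : g (- Z.of_nat (S K))%Z = 0 -> g (Z.of_nat (S K)) = 0 ->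
  sum_n (fun i => g (Z.of_nat i - Z.of_nat (S K))%Z) (2 * S K) = sum_n (fun i => g (Z.of_nat i - Z.of_nat K)%Z) (2 * K).
Proof.
  intros H1 H2. replace (2 * S K)%nat with (S (S (2 * K))) by lia.
  rewrite sum_Sn. change (plus ?a ?b) with (a + b). rewrite sum_front.
  replace (Z.of_nat 0 - Z.of_nat (S K))%Z with (- Z.of_nat (S K))%Z by lia.
  replace (Z.of_nat (S (S (2 * K))) - Z.of_nat (S K))%Z with (Z.of_nat (S K)) by lia.
  rewrite H1, H2. rewrite Rplus_0_l, Rplus_0_r. apply sum_n_ext. intros i. f_equal. lia.
Qed.

Lemma shift_sum (g : Z -> R) B : (forall k, (Z.of_nat B < Z.abs k)%Z -> g k = 0) ->
  forall K, (B <= K)%nat ->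
  sum_n (fun i => g (Z.of_nat i - Z.of_nat K)%Z) (2 * K) = sum_n (fun i => g (Z.of_nat i - Z.of_nat B)%Z) (2 * B).
Proof.
  intros Hg K HK. replace K with (B + (K - B))%nat by lia. generalize (K - B)%nat. intros d.
  induction d.
  - rewrite Nat.add_0_r; auto.
  - replace (B + S d)%nat with (S (B + d)) by lia. rewrite shift_step; auto; apply Hg; lia.
Qed.

Lemma sum_ind_h (B : nat) (j : Z) (h : Z -> R) :
  sum_n (fun i => (if Z.eqb (Z.of_nat i - Z.of_nat B) j then 1 else 0) * h (Z.of_nat i - Z.of_nat B)%Z) (2 * B)
  = h j * ind1 B j.
Proof.
  rewrite (sum_n_ext _ (fun i => h j * (if Z.eqb (Z.of_nat i - Z.of_nat B) j then 1 else 0))).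
  - rewrite sumn_scal, sum_ind. auto.
  - intros i. destruct (Z.eqb_spec (Z.of_nat i - Z.of_nat B) j) as [<-|]; simpl; ring.
Qed.

Lemma lsum_seq (f : nat -> R) K : lsum f (seq 0 (S K)) = sum_n f K.
Proof.
  induction K.
  - simpl. rewrite sum_O. ring.
  - rewrite seq_S, lsum_app, IHK, sum_Sn. simpl. change (plus ?a ?b) with (a + b). simpl; ring.
Qed.

Section P2.
Variables (kappa alpha : R) (n m : Z) (a b : Z -> R).
Hypothesis Hv : (Z.abs n + Z.abs m <> 0)%Z.

Definition Lk (k : Z) : list trm := Trm (a k) (b k) (k * n) (k * m) :: nil.
Definition Tk (k p q : Z) (t : R) : C := ThB (scaleM kappa alpha t (modes (Lk k))) p q.
Definition Bq (p q : Z) : nat := Z.to_nat (Z.abs p + Z.abs q).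
Definition Th2 (p q : Z) (t : R) : C := sum_n (fun i => Tk (Z.of_nat i - Z.of_nat (Bq p q)) p q t) (2 * Bq p q).

Lemma abs_bound k p q : p = (k * n)%Z -> q = (k * m)%Z -> (Z.abs k <= Z.abs p + Z.abs q)%Z.
Proof. intros -> ->. rewrite !Z.abs_mul. nia. Qed.

Lemma Tk_form k p q t :
  Tk k p q t = (Ef kappa alpha p q t * (indz p q (k * n) (k * m) * (a k / 2) + indz p q (- (k * n)) (- (k * m)) * (a k / 2)),
                Ef kappa alpha p q t * (indz p q (k * n) (k * m) * (- b k / 2) + indz p q (- (k * n)) (- (k * m)) * (b k / 2))).
Proof. unfold Tk. rewrite ThB_scale. unfold ThB, modes, Lk. simpl. f_equal; f_equal; ring. Qed.

Lemma indz_far k p q : (Z.abs p + Z.abs q < Z.abs k)%Z ->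
  indz p q (k * n) (k * m) = 0 /\ indz p q (- (k * n)) (- (k * m)) = 0.
Proof.
  intros H. unfold indz. split.
  - destruct (Z.eqb_spec p (k * n)), (Z.eqb_spec q (k * m)); simpl; auto.
    pose proof (abs_bound k p q e e0). lia.
  - destruct (Z.eqb_spec p (- (k * n))), (Z.eqb_spec q (- (k * m))); simpl; auto.
    assert (p = (- k) * n)%Z by lia. assert (q = (- k) * m)%Z by lia.
    pose proof (abs_bound (- k) p q H0 H1). lia.
Qed.

Lemma Tk_far k p q t : (Z.of_nat (Bq p q) < Z.abs k)%Z -> Tk k p q t = (0, 0).
Proof.
  intros H. unfold Bq in H. rewrite Z2Nat.id in H by lia.
  destruct (indz_far k p q H) as [E1 E2]. rewrite Tk_form, E1, E2. f_equal; ring.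
Qed.

Lemma Th2_fst p q t : fst (Th2 p q t) = sum_n (fun i => fst (Tk (Z.of_nat i - Z.of_nat (Bq p q)) p q t)) (2 * Bq p q).
Proof. unfold Th2. rewrite sum_n_C. auto. Qed.
Lemma Th2_snd p q t : snd (Th2 p q t) = sum_n (fun i => snd (Tk (Z.of_nat i - Z.of_nat (Bq p q)) p q t)) (2 * Bq p q).
Proof. unfold Th2. rewrite sum_n_C. auto. Qed.

Lemma Th2_lim p q t K : (Bq p q <= K)%nat ->
  sum_n (fun i => Tk (Z.of_nat i - Z.of_nat K) p q t) (2 * K) = Th2 p q t.
Proof.
  intros HK. rewrite sum_n_C. rewrite (surjective_pairing (Th2 p q t)), Th2_fst, Th2_snd. f_equal.
  - apply (shift_sum (fun k => fst (Tk k p q t))); auto. intros k Hk. rewrite Tk_far; auto.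
  - apply (shift_sum (fun k => snd (Tk k p q t))); auto. intros k Hk. rewrite Tk_far; auto.
Qed.

Definition online (p q : Z) : Prop := exists j, p = (j * n)%Z /\ q = (j * m)%Z.

Lemma Th2_off p q t : ~ online p q -> Th2 p q t = (0, 0).
Proof.
  intros Hno. rewrite (surjective_pairing (Th2 p q t)), Th2_fst, Th2_snd.
  assert (Hz : forall k, indz p q (k * n) (k * m) = 0 /\ indz p q (- (k * n)) (- (k * m)) = 0).
  { intros k. unfold indz. split.
    - destruct (Z.eqb_spec p (k * n)), (Z.eqb_spec q (k * m)); simpl; auto. exfalso; apply Hno; exists k; auto.
    - destruct (Z.eqb_spec p (- (k * n))), (Z.eqb_spec q (- (k * m))); simpl; auto.
      exfalso; apply Hno; exists (- k)%Z; lia. }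
  f_equal; rewrite <- (sumn_zero (2 * Bq p q)); apply sum_n_ext; intros i;
    rewrite Tk_form; destruct (Hz (Z.of_nat i - Z.of_nat (Bq p q))%Z) as [-> ->]; simpl; ring.
Qed.

Lemma Th2_exp p q t : Th2 p q t = (Ef kappa alpha p q t * fst (Th2 p q 0), Ef kappa alpha p q t * snd (Th2 p q 0)).
Proof.
  rewrite (surjective_pairing (Th2 p q t)), !Th2_fst, !Th2_snd. f_equal; rewrite <- sumn_scal; apply sum_n_ext; intros i;
  rewrite !Tk_form; unfold Ef; rewrite Rmult_0_r, exp_0; simpl; ring.
Qed.

Lemma nl_zero p q t a' b' : sqg_nl_term (fun a0 b0 => Th2 a0 b0 t) p q a' b' = (0, 0).
Proof.
  unfold sqg_nl_term. destruct (Z.eqb a' 0 && Z.eqb b' 0)%bool; [reflexivity|].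
  destruct (classic (online a' b')) as [[j [Ej1 Ej2]]|H1].
  2: { rewrite (Th2_off a' b' t H1). unfold Cmult; simpl. f_equal; ring. }
  destruct (classic (online (p - a') (q - b'))) as [[l [El1 El2]]|H2].
  2: { rewrite (Th2_off _ _ t H2). unfold Cmult; simpl. f_equal; ring. }
  assert (Er : (IZR a' * IZR (q - b') - IZR b' * IZR (p - a')) = 0).
  { rewrite El1, El2, Ej1, Ej2, !mult_IZR. ring. }
  rewrite Er. unfold Rdiv. rewrite Rmult_0_l. unfold Cmult, RtoC; simpl. f_equal; ring.
Qed.


Lemma indz_line j k : indz (j * n) (j * m) (k * n) (k * m) = if Z.eqb k j then 1 else 0.
Proof.
  unfold indz. destruct (Z.eqb_spec k j) as [->|Hkj].
  - rewrite !Z.eqb_refl; auto.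
  - destruct (Z.eqb_spec (j * n) (k * n)), (Z.eqb_spec (j * m) (k * m)); simpl; auto.
    exfalso. assert ((j - k) * n = 0)%Z by lia. assert ((j - k) * m = 0)%Z by lia.
    apply Z.mul_eq_0 in H, H0. lia.
Qed.
Lemma indz_line' j k : indz (j * n) (j * m) (- (k * n)) (- (k * m)) = if Z.eqb k (- j) then 1 else 0.
Proof.
  replace (- (k * n))%Z with (- k * n)%Z by ring. replace (- (k * m))%Z with (- k * m)%Z by ring.
  rewrite indz_line. destruct (Z.eqb_spec (- k) j), (Z.eqb_spec k (- j)); auto; lia.
Qed.

Lemma Th2_on j t :
  Th2 (j * n) (j * m) t = (Ef kappa alpha (j * n) (j * m) t * ((a j + a (- j)%Z) / 2),
                           Ef kappa alpha (j * n) (j * m) t * ((b (- j)%Z - b j) / 2)).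
Proof.
  set (B := Bq (j * n) (j * m)).
  assert (HB : (Z.abs j <= Z.of_nat B)%Z) by (unfold B, Bq; rewrite Z2Nat.id by lia; apply abs_bound; auto).
  rewrite (surjective_pairing (Th2 _ _ t)), Th2_fst, Th2_snd. fold B.
  f_equal.
  - rewrite (sum_n_ext _ (fun i => Ef kappa alpha (j * n) (j * m) t *
       ((if Z.eqb (Z.of_nat i - Z.of_nat B) j then 1 else 0) * (a (Z.of_nat i - Z.of_nat B)%Z / 2)
       + (if Z.eqb (Z.of_nat i - Z.of_nat B) (- j) then 1 else 0) * (a (Z.of_nat i - Z.of_nat B)%Z / 2)))).
    + rewrite sumn_scal. f_equal. rewrite sumn_plus.
      rewrite (sum_ind_h B j (fun k => a k / 2)), (sum_ind_h B (- j) (fun k => a k / 2)).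
      rewrite !ind1_in by lia. simpl; field.
    + intros i. rewrite Tk_form, indz_line, indz_line'. reflexivity.
  - rewrite (sum_n_ext _ (fun i => Ef kappa alpha (j * n) (j * m) t *
       ((if Z.eqb (Z.of_nat i - Z.of_nat B) j then 1 else 0) * (- b (Z.of_nat i - Z.of_nat B)%Z / 2)
       + (if Z.eqb (Z.of_nat i - Z.of_nat B) (- j) then 1 else 0) * (b (Z.of_nat i - Z.of_nat B)%Z / 2)))).
    + rewrite sumn_scal. f_equal. rewrite sumn_plus.
      rewrite (sum_ind_h B j (fun k => - b k / 2)), (sum_ind_h B (- j) (fun k => b k / 2)).
      rewrite !ind1_in by lia. simpl; field.
    + intros i. rewrite Tk_form, indz_line, indz_line'. reflexivity.
Qed.

End P2.

Lemma Ef_bound kappa alpha p q t : 0 < kappa -> 0 <= t -> 0 < Ef kappa alpha p q t <= 1.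
Proof.
  intros Hk Ht. unfold Ef. split. apply exp_pos. apply exp_le1.
  pose proof (fracpow_nonneg (modsq p q) alpha). assert (0 <= kappa * fracpow (modsq p q) alpha) by nra. nra.
Qed.

Lemma Th2_L2 kappa alpha n m (a b : Z -> R) t :
  (Z.abs n + Z.abs m <> 0)%Z -> 0 < kappa -> 0 <= t ->
  ex_series (fun j : nat =>
        INR j * (a (Z.of_nat j) ^ 2 + b (Z.of_nat j) ^ 2)
        + INR j * (a (- Z.of_nat j)%Z ^ 2 + b (- Z.of_nat j)%Z ^ 2)) ->
  exists B, forall N, box_sum_R (fun p q => Cmod (Th2 kappa alpha n m a b p q t) ^ 2) N <= B.
Proof.
  intros Hv Hk Ht Hser.
  set (u := fun j : nat => INR j * (a (Z.of_nat j) ^ 2 + b (Z.of_nat j) ^ 2)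
        + INR j * (a (- Z.of_nat j)%Z ^ 2 + b (- Z.of_nat j)%Z ^ 2)) in Hser.
  set (s := fun z : Z => a z ^ 2 + b z ^ 2 + a (- z)%Z ^ 2 + b (- z)%Z ^ 2).
  assert (Hs0 : forall z, 0 <= s z).
  { intros z; unfold s. pose proof (pow2_ge_0 (a z)); pose proof (pow2_ge_0 (b z));
    pose proof (pow2_ge_0 (a (-z)%Z)); pose proof (pow2_ge_0 (b (-z)%Z)); lra. }
  assert (Hsym : forall z, s (- z)%Z = s z).
  { intros z; unfold s. rewrite Z.opp_involutive. ring. }
  assert (Hu : forall K, sum_n u K <= Series u).
  { intros K. apply (is_lim_seq_incr_compare (sum_n u) (Series u)).
    - apply (Series_correct u Hser).
    - intros k. rewrite sum_Sn. change (plus ?x ?y) with (x + y).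
      assert (0 <= u (S k)). { unfold u. pose proof (pos_INR (S k)).
        pose proof (pow2_ge_0 (a (Z.of_nat (S k)))); pose proof (pow2_ge_0 (b (Z.of_nat (S k))));
        pose proof (pow2_ge_0 (a (- Z.of_nat (S k))%Z)); pose proof (pow2_ge_0 (b (- Z.of_nat (S k))%Z)). nra. }
      lra. }
  assert (Hsu : forall K, sum_n (fun i => s (Z.of_nat i)) K <= s 0%Z + sum_n u K).
  { induction K.
    - rewrite !sum_O. unfold u. simpl. lra.
    - rewrite !sum_Sn. change (plus ?x ?y) with (x + y).
      assert (s (Z.of_nat (S K)) <= u (S K)).
      { unfold u, s. rewrite S_INR. pose proof (pos_INR K). pose proof (Hs0 (Z.of_nat (S K))). unfold s in H0. nra. }
      lra. }
  exists (2 * (s 0%Z + Series u)). intros N.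
  set (l := flat_map (fun i => (i, true) :: (i, false) :: nil) (seq 0 (S (2 * N)))).
  set (e := fun x : nat * bool => if snd x then (Z.of_nat (fst x) * n, Z.of_nat (fst x) * m)%Z
                                  else (- (Z.of_nat (fst x) * n), - (Z.of_nat (fst x) * m))%Z).
  apply Rle_trans with (lsum (fun x : nat * bool => s (Z.of_nat (fst x))) l).
  - apply (BOX e).
    + intros; apply Hs0.
    + intros p q Hp Hq.
      assert (Hnn : 0 <= lsum (fun x => indz p q (fst (e x)) (snd (e x)) * s (Z.of_nat (fst x))) l).
      { apply lsum_nonneg. intros x _. pose proof (indz_range p q (fst (e x)) (snd (e x))). pose proof (Hs0 (Z.of_nat (fst x))). nra. }
      destruct (classic (online n m p q)) as [[j [-> ->]]|Hno].
      * rewrite Th2_on by auto. rewrite Cmod_sq. cbn [fst snd].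
        pose proof (Ef_bound kappa alpha (j * n) (j * m) t Hk Ht) as HE.
        set (E := Ef kappa alpha (j * n) (j * m) t) in *.
        assert (Hj : (Z.abs j <= 2 * Z.of_nat N)%Z).
        { pose proof (abs_bound n m Hv j (j * n) (j * m) eq_refl eq_refl). lia. }
        apply Rle_trans with (s j).
        { unfold s. assert (0 <= E * E <= 1) by nra.
          pose proof (pow2_ge_0 (a j + a (-j)%Z)); pose proof (pow2_ge_0 (b (-j)%Z - b j)).
          pose proof (pow2_ge_0 (a j - a (-j)%Z)); pose proof (pow2_ge_0 (b (-j)%Z + b j)).
          nra. }
        destruct (Z_le_gt_dec 0 j).
        { set (x := (Z.to_nat j, true)).
          assert (Hx : In x l).
          { unfold l, x. apply in_flat_map. exists (Z.to_nat j). split. apply in_seq. lia. simpl; auto. }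
          eapply Rle_trans; [|apply (lsum_single _ l x Hx)].
          - unfold x, e; simpl. rewrite Z2Nat.id by lia. unfold indz. rewrite !Z.eqb_refl. simpl. lra.
          - intros y _. pose proof (indz_range (j * n) (j * m) (fst (e y)) (snd (e y))). pose proof (Hs0 (Z.of_nat (fst y))). nra. }
        { set (x := (Z.to_nat (- j), false)).
          assert (Hx : In x l).
          { unfold l, x. apply in_flat_map. exists (Z.to_nat (- j)). split. apply in_seq. lia. simpl; auto. }
          eapply Rle_trans; [|apply (lsum_single _ l x Hx)].
          - unfold x, e; simpl. rewrite Z2Nat.id by lia.
            replace (- (- j * n))%Z with (j * n)%Z by ring. replace (- (- j * m))%Z with (j * m)%Z by ring.
            unfold indz. rewrite !Z.eqb_refl. simpl. rewrite Hsym. lra.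
          - intros y _. pose proof (indz_range (j * n) (j * m) (fst (e y)) (snd (e y))). pose proof (Hs0 (Z.of_nat (fst y))). nra. }
      * rewrite Th2_off by auto. rewrite Cmod_sq. cbn [fst snd]. lra.
  - unfold l. rewrite lsum_flat_map. cbn [lsum fst].
    rewrite (lsum_ext _ (fun i => 2 * s (Z.of_nat i))) by (intros; ring).
    rewrite lsum_scal, lsum_seq. specialize (Hsu (2 * N)%nat). specialize (Hu (2 * N)%nat). lra.
Qed.

Lemma part2 (kappa alpha : R) (Hkappa : 0 < kappa) :
  (forall (n m : Z) (a b : Z -> R),
      (Z.abs n + Z.abs m <> 0)%Z ->
      ex_series (fun j : nat =>
        INR j * (a (Z.of_nat j) ^ 2 + b (Z.of_nat j) ^ 2)
        + INR j * (a (- Z.of_nat j)%Z ^ 2 + b (- Z.of_nat j)%Z ^ 2)) ->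
      solves_SQG_series kappa alpha
        (fun k x y t =>
           exp (- kappa * fracpow (IZR n ^ 2 * IZR k ^ 2 + IZR m ^ 2 * IZR k ^ 2) alpha * t) *
             (a k * cos (IZR k * IZR n * x + IZR k * IZR m * y)
              + b k * sin (IZR k * IZR n * x + IZR k * IZR m * y)))).
Proof.
  intros n m a b Hv Hser.
  assert (Hth : forall k x y t,
     exp (- kappa * fracpow (IZR n ^ 2 * IZR k ^ 2 + IZR m ^ 2 * IZR k ^ 2) alpha * t) *
       (a k * cos (IZR k * IZR n * x + IZR k * IZR m * y)
        + b k * sin (IZR k * IZR n * x + IZR k * IZR m * y))
     = ev (Lt kappa alpha t (Lk n m a b k)) x y).
  { intros k x y t. unfold ev, Lt, Lk, Ef, ev1. cbn [lsum map tu tv tc ts].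
    assert (Em : modsq (k * n) (k * m) = IZR n ^ 2 * IZR k ^ 2 + IZR m ^ 2 * IZR k ^ 2)
      by (unfold modsq; rewrite !mult_IZR; ring).
    rewrite Em, !mult_IZR. ring. }
  split.
  - intros k t x y. cbv beta. rewrite !Hth. apply ev_per.
  - exists (Th2 kappa alpha n m a b). split.
    + intros p q t.
      apply (filterlim_ext_loc (fun _ => Th2 kappa alpha n m a b p q t)); [|apply filterlim_const].
      exists (Bq p q). intros K HK. symmetry.
      rewrite <- (Th2_lim kappa alpha n m a b Hv p q t K HK).
      apply sum_n_ext. intros i.
      rewrite (fcoef_ext _ (fun x y => ev (Lt kappa alpha t (Lk n m a b (Z.of_nat i - Z.of_nat K))) x y))
        by (intros; apply Hth).
      rewrite fcoef_ev, modes_Lt. reflexivity.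
    + split.
      * intros t Ht. apply Th2_L2; auto.
      * intros p q t Ht. exists (RtoC 0). split.
        -- split.
           ++ exists 0. intros N. right.
              rewrite (box_sum_R_ext _ (fun _ _ => 0)). apply box_sum_R_zero.
              intros; rewrite nl_zero by auto. apply Cmod_0.
           ++ apply (filterlim_ext_loc (fun _ => RtoC 0)); [|apply filterlim_const].
              exists 0%nat. intros N _. rewrite box_sum_C. unfold RtoC. symmetry. f_equal.
              ** rewrite (box_sum_R_ext _ (fun _ _ => 0)). apply box_sum_R_zero.
                 intros; rewrite nl_zero by auto. reflexivity.
              ** rewrite (box_sum_R_ext _ (fun _ _ => 0)). apply box_sum_R_zero.
                 intros; rewrite nl_zero by auto. reflexivity.
        -- cbv zeta. rewrite (Th2_exp kappa alpha n m a b p q t).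
           set (X := fst (Th2 kappa alpha n m a b p q 0)). set (Y := snd (Th2 kappa alpha n m a b p q 0)). split.
           ++ apply (is_derive_ext (fun s => Ef kappa alpha p q s * X)).
              { intros; rewrite Th2_exp; auto. }
              unfold Ef. simpl. auto_derive; auto. ring.
           ++ apply (is_derive_ext (fun s => Ef kappa alpha p q s * Y)).
              { intros; rewrite Th2_exp; auto. }
              unfold Ef. simpl. auto_derive; auto. ring.
Qed.

Theorem theorem1 (kappa alpha : R) (Halpha : 0 <= alpha < 1) (Hkappa : 0 < kappa) :
  (forall (c1 c2 c3 c4 c5 c6 c7 c8 : R) (n m k : Z),
      (n * m <> 0)%Z ->
      ((Rabs c1 + Rabs c2 + Rabs c3 + Rabs c4) * (Rabs c5 + Rabs c6 + Rabs c7 + Rabs c8) <> 0 ->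
         (n * n + m * m = k * k)%Z) ->
      solves_SQG kappa alpha
        (fun x y t =>
           exp (- kappa * fracpow (IZR n ^ 2 + IZR m ^ 2) alpha * t) *
             (c1 * sin (IZR n * x) * sin (IZR m * y) + c2 * cos (IZR n * x) * sin (IZR m * y)
              + c3 * sin (IZR n * x) * cos (IZR m * y) + c4 * cos (IZR n * x) * cos (IZR m * y))
           + exp (- kappa * fracpow (IZR k ^ 2) alpha * t) *
             (c5 * sin (IZR k * x) + c6 * sin (IZR k * y)
              + c7 * cos (IZR k * x) + c8 * cos (IZR k * y)))) /\
  (forall (n m : Z) (a b : Z -> R),
      (Z.abs n + Z.abs m <> 0)%Z ->
      ex_series (fun j : nat =>
        INR j * (a (Z.of_nat j) ^ 2 + b (Z.of_nat j) ^ 2)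
        + INR j * (a (- Z.of_nat j)%Z ^ 2 + b (- Z.of_nat j)%Z ^ 2)) ->
      solves_SQG_series kappa alpha
        (fun k x y t =>
           exp (- kappa * fracpow (IZR n ^ 2 * IZR k ^ 2 + IZR m ^ 2 * IZR k ^ 2) alpha * t) *
             (a k * cos (IZR k * IZR n * x + IZR k * IZR m * y)
              + b k * sin (IZR k * IZR n * x + IZR k * IZR m * y)))).
Proof.
  split; [apply part1 | apply part2; exact Hkappa].
Qed.
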